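(* Let $X$ be a connected, locally connected normal space with at least two points. Then $X$ has a quotient space homeomorphic to the unit interval $[0,1]$; equivalently, there exists a continuous quotient surjection $f\colon X\to[0,1]$.
   Context: Here a normal space is a topological space in which singletons are closed and any two disjoint closed sets have disjoint open neighbourhoods. A surjection $f\colon X\to Y$ is a quotient map if for every $G\subseteq Y$, $G$ is open in $Y$ iff $f^{-1}(G)$ is open in $X$. ''$X$ has a quotient homeomorphic to $[0,1]$'' means there is an equivalence relation on $X$ whose quotient space is homeomorphic to $[0,1]$. *)

(* Defs.v *)
From HB Require Import structures.
From mathcomp Require Import all_boot all_order all_algebra.
From mathcomp Require Import all_classical all_reals all_analysis.
Set Implicit Arguments. Unset Strict Implicit. Unset Printing Implicit Defensive.
Import Order.TTheory GRing.Theory Num.Theory.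
Import numFieldNormedType.Exports.
Local Open Scope classical_set_scope.
Local Open Scope ring_scope.

Definition normal_T1_space (X : topologicalType) : Prop :=
  (forall x : X, closed [set x]) /\
  (forall A B : set X, closed A -> closed B -> A `&` B = set0 ->
     exists U V : set X, [/\ open U, open V, A `<=` U, B `<=` V & U `&` V = set0]).

Definition locally_connected (X : topologicalType) : Prop :=
  forall (x : X) (U : set X), nbhs x U ->
    exists V : set X, [/\ open V, V x, connected V & V `<=` U].

Definition open_in_unit_interval (R : realType) (G : set R) : Prop :=
  exists U : set R, open U /\ G = U `&` [set` `[(0:R), 1]].

Definition quotient_map_onto_unit_interval (R : realType) (X : topologicalType)
  (f : X -> R) : Prop :=
  f @` setT = [set` `[(0:R), 1]] /\
  (forall G : set R, G `<=` [set` `[(0:R), 1]] ->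
     (open_in_unit_interval G <-> open (f @^-1` G))).

(* Main.v *)
Require Import Defs.
From HB Require Import structures.
From mathcomp Require Import all_boot all_order all_algebra.
From mathcomp Require Import all_classical all_reals all_analysis.
Local Open Scope classical_set_scope.
Local Open Scope ring_scope.
From mathcomp Require Import lra.
Import Order.TTheory GRing.Theory Num.Theory.
Import numFieldNormedType.Exports.

Lemma ivt_conn (R : realType) (X : topologicalType) (f : X -> R)
  (cf : continuous f) (V : set X) (x y : X) (s : R) :
  connected V -> V x -> V y -> f y < s -> s < f x -> exists2 z, V z & f z = s.
Proof.
move=> cV Vx Vy ys sx; apply: contrapT => nz.
have := cV (V `&` [set z | f z < s]).
have E : V `&` [set z | f z < s] = V `&` (f @^-1` [set r | r <= s]).
  apply/seteqP; split=> z [Vz fz]; split => //=; first exact: ltW.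
  rewrite lt_neqAle fz andbT; apply/eqP => fzs; apply: nz; by exists z.
case/(_ _ _ _)/Wrap.
- by exists y.
- exists (f @^-1` [set r | r < s]) => //.
  by apply: open_comp; [move=> z _; exact: cf | exact: open_lt].
- exists (f @^-1` [set r | r <= s]); last exact: E.
  by apply: preimage_closed; [move=> z _; exact: cf | exact: closed_le].
move=> eV; have : (V `&` [set z | f z < s]) x by rewrite eV.
by case=> _ /= /(lt_trans sx); rewrite ltxx.
Qed.

Lemma left_side (R : realType) (X : topologicalType) (f : X -> R)
  (cf : continuous f) (G : set R) (a : X) (t : R) :
  connected [set: X] -> locally_connected X ->
  open (f @^-1` G) -> f a < t -> (exists b, t <= f b) -> G t ->
  exists2 e : R, 0 < e & forall u, t - e <= u <= t -> G u.
Proof.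
move=> cX lc oW fat [b tb] Gt.
pose A := [set z | t <= f z].
have cA : closed A.
  by apply: (@preimage_closed _ _ f [set r | t <= r]);
    [move=> z _; exact: cf | exact: closed_ge].
have nA : ~ open A.
  move=> oA; have AT : A = [set: X] := cX A (ex_intro _ b tb)
    (ex_intro2 _ _ A oA (esym (setTI A))) (ex_intro2 _ _ A cA (esym (setTI A))).
  have : A a by rewrite AT.
  by rewrite /A /= leNgt fat.
have [x [Ax nix]] : exists x, A x /\ ~ nbhs x A.
  apply: contrapT => H; apply: nA; rewrite openE => z Az.
  by apply: contrapT => nz; apply: H; exists z.
have fxt : f x = t.
  apply/eqP; rewrite eq_le Ax andbT leNgt; apply/negP => tfx; apply: nix.
  apply: (@filterS _ _ _ (f @^-1` [set r | t < r])).
    by move=> z /= /ltW.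
  apply: open_nbhs_nbhs; split => //.
  by apply: open_comp; [move=> z _; exact: cf | exact: open_gt].
have Wx : nbhs x (f @^-1` G).
  by apply: open_nbhs_nbhs; split => //=; rewrite fxt.
have [V [oV Vx cV VW]] := lc x _ Wx.
have [y [Vy fyt]] : exists y, V y /\ f y < t.
  apply: contrapT => H; apply: nix.
  apply: (@filterS _ _ _ V); last by apply: open_nbhs_nbhs.
  move=> z Vz; rewrite /A /= leNgt; apply/negP => fz; apply: H; by exists z.
exists (t - f y); first by rewrite subr_gt0.
move=> u /andP[]; rewrite opprB addrCA subrr addr0 => yu ut.
move: yu; rewrite le_eqVlt => /orP[/eqP <-|yu]; first exact: VW.
move: ut; rewrite le_eqVlt => /orP[/eqP ->|ut] //.
have [z Vz <-] := @ivt_conn R X f cf V x y u cV Vx Vy yu (ltac:(by rewrite fxt)).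
exact: VW.
Qed.

Lemma right_side (R : realType) (X : topologicalType) (f : X -> R)
  (cf : continuous f) (G : set R) (a : X) (t : R) :
  connected [set: X] -> locally_connected X ->
  open (f @^-1` G) -> t < f a -> (exists b, f b <= t) -> G t ->
  exists2 e : R, 0 < e & forall u, t <= u <= t + e -> G u.
Proof.
move=> cX lc oW fat [b tb] Gt.
pose A := [set z | f z <= t].
have cA : closed A.
  by apply: (@preimage_closed _ _ f [set r | r <= t]);
    [move=> z _; exact: cf | exact: closed_le].
have nA : ~ open A.
  move=> oA; have AT : A = [set: X] := cX A (ex_intro _ b tb)
    (ex_intro2 _ _ A oA (esym (setTI A))) (ex_intro2 _ _ A cA (esym (setTI A))).
  have : A a by rewrite AT.
  by rewrite /A /= leNgt fat.
have [x [Ax nix]] : exists x, A x /\ ~ nbhs x A.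
  apply: contrapT => H; apply: nA; rewrite openE => z Az.
  by apply: contrapT => nz; apply: H; exists z.
have fxt : f x = t.
  apply/eqP; rewrite eq_le Ax /= leNgt; apply/negP => tfx; apply: nix.
  apply: (@filterS _ _ _ (f @^-1` [set r | r < t])).
    by move=> z /= /ltW.
  apply: open_nbhs_nbhs; split => //.
  by apply: open_comp; [move=> z _; exact: cf | exact: open_lt].
have Wx : nbhs x (f @^-1` G).
  by apply: open_nbhs_nbhs; split => //=; rewrite fxt.
have [V [oV Vx cV VW]] := lc x _ Wx.
have [y [Vy fyt]] : exists y, V y /\ t < f y.
  apply: contrapT => H; apply: nix.
  apply: (@filterS _ _ _ V); last by apply: open_nbhs_nbhs.
  move=> z Vz; rewrite /A /= leNgt; apply/negP => fz; apply: H; by exists z.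
exists (f y - t); first by rewrite subr_gt0.
move=> u /andP[]; rewrite addrCA subrr addr0 => tu uy.
move: uy; rewrite le_eqVlt => /orP[/eqP ->|uy]; first exact: VW.
move: tu; rewrite le_eqVlt => /orP[/eqP <-|tu] //.
have [z Vz <-] := @ivt_conn R X f cf V y x u cV Vy Vx (ltac:(by rewrite fxt)) uy.
exact: VW.
Qed.

Theorem mainTheorem3 (R : realType) (X : topologicalType) :
  connected [set: X] ->
  locally_connected X ->
  normal_T1_space X ->
  (exists x y : X, x <> y) ->
  exists f : X -> R, quotient_map_onto_unit_interval f.
Proof.
move=> cX lc [T1 sep] [a [b ab]].
have nX : normal_space X by apply/(@normal_openP R X).
have dab : [set a] `&` [set b] = set0.
  by apply/seteqP; split=> z // [/= -> e]; exact: ab e.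
have [f [cf fa fb rf]] := urysohn_ext_itv nX (T1 a) (T1 b) dab (@ltr01 R).
have fa0 : f a = 0 by apply: fa; exists a.
have fb1 : f b = 1 by apply: fb; exists b.
have f01 : forall z, 0 <= f z <= 1.
  move=> z; have := rf (f z) (ex_intro2 _ _ z I erefl).
  by rewrite /= in_itv.
exists f; split.
  apply/seteqP; split.
    by move=> _ [z _ <-]; rewrite /= in_itv /=; exact: f01.
  move=> t; rewrite /= in_itv /= => /andP[t0 t1].
  case: (eqVneq t 0) => [->|t0']; first by exists a.
  case: (eqVneq t 1) => [->|t1']; first by exists b.
  have [z _ fz] := @ivt_conn R X f cf setT b a t cX I I
    (ltac:(rewrite fa0 lt_neqAle eq_sym t0' t0 //))
    (ltac:(rewrite fb1 lt_neqAle t1' t1 //)).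
  by exists z.
move=> G GI; split.
  case=> U [oU ->].
  have -> : f @^-1` (U `&` [set` `[(0:R), 1]]) = f @^-1` U.
    apply/seteqP; split=> z /=; first by case.
    by move=> Uz; split => //=; rewrite in_itv /=; exact: f01.
  by apply: open_comp => // z _; exact: cf.
move=> oW.
have loc : forall t, G t -> exists e1 e2 : R,
  [/\ 0 < e1, 0 < e2, (forall u, t - e1 <= u <= t -> 0 <= u -> G u)
    & (forall u, t <= u <= t + e2 -> u <= 1 -> G u)].
  move=> t Gt; have := GI t Gt; rewrite /= in_itv /= => /andP[t0 t1].
  have [e1 e10 H1] : exists2 e1 : R, 0 < e1 &
      forall u, t - e1 <= u <= t -> 0 <= u -> G u.
    case: (eqVneq t 0) => [t0'|t0'].
      exists 1 => // u /andP[_ ut] u0.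
      by rewrite (_ : u = t) //; apply/eqP; rewrite eq_le ut t0' u0.
    have [e e0 He] := @left_side R X f cf G a t cX lc oW
      (ltac:(rewrite fa0 lt_neqAle eq_sym t0' t0 //))
      (ex_intro (fun b => t <= f b) b (ltac:(rewrite /= fb1 //))) Gt.
    by exists e => // u uH _; exact: He.
  have [e2 e20 H2] : exists2 e2 : R, 0 < e2 &
      forall u, t <= u <= t + e2 -> u <= 1 -> G u.
    case: (eqVneq t 1) => [t1'|t1'].
      exists 1 => // u /andP[tu _] u1.
      by rewrite (_ : u = t) //; apply/eqP; rewrite eq_le tu t1' u1.
    have [e e0 He] := @right_side R X f cf G b t cX lc oW
      (ltac:(rewrite fb1 lt_neqAle t1' t1 //))
      (ex_intro (fun b => f b <= t) a (ltac:(rewrite /= fa0 //))) Gt.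
    by exists e => // u uH _; exact: He.
  by exists e1, e2.
pose U := [set s : R | exists t e1 e2, [/\ G t, 0 < e1, 0 < e2,
    (forall u, t - e1 <= u <= t -> 0 <= u -> G u)
    & (forall u, t <= u <= t + e2 -> u <= 1 -> G u)] /\ (t - e1 < s < t + e2)].
exists U; split.
  rewrite openE => s [t [e1 [e2 [[Gt e10 e20 H1 H2] st]]]].
  apply: (@filterS _ _ _ ([set r | t - e1 < r] `&` [set r | r < t + e2])).
    move=> r [/= r1 r2]; exists t, e1, e2; split => //.
    by rewrite r1 r2.
  apply: open_nbhs_nbhs; split; first by apply: openI; [exact: open_gt | exact: open_lt].
  by case/andP: st.
apply/seteqP; split.
  move=> t Gt; have [e1 [e2 [e10 e20 H1 H2]]] := loc t Gt.
  split; last exact: GI.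
  exists t, e1, e2; split => //; apply/andP; split; lra.
move=> s [[t [e1 [e2 [[Gt e10 e20 H1 H2] /andP[l r]]]]]].
rewrite /= in_itv /= => /andP[s0 s1].
case: (lerP s t) => st.
  by apply: H1 => //; apply/andP; split => //; apply: ltW.
by apply: H2 => //; apply/andP; split; [apply: ltW | apply: ltW].
Qed.
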